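(* Let $\mathcal{A} = (V, V_0, V_1, E, v_I)$ be an arena, $w \colon E \to -\mathbb{N} \cup \{\mathrm{R}\}$, $cap \in \mathbb{N}$ and $t \in \mathbb{N}$. If Player~$0$ wins $(\mathcal{A}, \mathsf{AvgRecharge}(w, cap, t))$, then she also wins it with a finite-state strategy implemented by a memory structure with $cap+2$ memory states.
   Context: An arena $\mathcal{A} = (V, V_0, V_1, E, v_I)$ consists of a finite directed graph $(V,E)$ in which every vertex has at least one outgoing edge, a partition $V = V_0 \uplus V_1$, and an initial vertex $v_I$. A play is an infinite path $v_0 v_1 \cdots$ with $v_0 = v_I$. A strategy for Player~$i$ is a map $\sigma \colon V^* V_i \to V$ with $(v, \sigma(xv)) \in E$; a play is consistent with $\sigma$ if $v_{n+1} = \sigma(v_0\cdots v_n)$ whenever $v_n \in V_i$. Player~$0$ wins $(\mathcal{A}, \mathrm{Win})$ (with a strategy $\sigma$) if all plays consistent with $\sigma$ lie in $\mathrm{Win}$. A memory structure $\mathcal{M} = (M, m_I, \mathrm{Upd})$ has a finite set $M$ of states, initial state $m_I$, and update $\mathrm{Upd} \colon M \times E \to M$, extended by $\mathrm{Upd}^+(v_0) = m_I$, $\mathrm{Upd}^+(v_0\cdots v_n v_{n+1}) = \mathrm{Upd}(\mathrm{Upd}^+(v_0\cdots v_n),(v_n,v_{n+1}))$. A next-move function $\mathrm{Nxt} \colon V_i \times M \to V$ with $(v,\mathrm{Nxt}(v,m)) \in E$ induces the strategy $\sigma(v_0\cdots v_n) = \mathrm{Nxt}(v_n, \mathrm{Upd}^+(v_0\cdots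 v_n))$; such a strategy is finite-state, implemented by $\mathcal{M}$, and its size is $|M|$. A recharge weight function $w \colon E \to -\mathbb{N} \cup \{\mathrm{R}\}$ labels each edge with a non-positive integer or the recharge action $\mathrm{R}$. For a finite path $x$ without $\mathrm{R}$-edges, $\mathrm{EL}(x)$ is the sum of its edge weights. $\mathrm{EL}_{cap}(v_0\cdots v_n) = cap + \mathrm{EL}(x)$ where $x$ is the longest suffix of $v_0\cdots v_n$ containing no $\mathrm{R}$-edge. $\mathsf{Recharge}(w,cap) = \{v_0 v_1 \cdots \mid \forall n.\ \mathrm{EL}_{cap}(v_0\cdots v_n) \ge 0\}$ and $\mathsf{AvgRecharge}(w,cap,t) = \{ v_0 v_1\cdots \mid \limsup_{n\to\infty} \frac1n \sum_{i=0}^{n-1}\mathrm{EL}_{cap}(v_0\cdots v_i) \le t\} \cap \mathsf{Recharge}(w,cap)$. *)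

(* Defs.v *)
From HB Require Import structures.
From mathcomp Require Import all_boot all_order all_algebra.
From mathcomp Require Import all_classical all_reals.
From mathcomp Require Import ereal sequences.
From mathcomp Require Import Rstruct.
From Stdlib Require Import Rdefinitions.

Set Implicit Arguments. Unset Strict Implicit. Unset Printing Implicit Defensive.
Import Order.TTheory GRing.Theory Num.Theory.

(** Arena: vertices [V : finType], edge relation [E], Player-0 vertices
    [V0] (Player-1 vertices are the complement), initial vertex [vI]. *)
Record arena := Arena {
  avert : finType;
  aedge : rel avert;
  aV0 : pred avert;
  ainit : avert;
  aedge_total : forall v : avert, exists v', aedge v v'
}.
Arguments aedge : clear implicits.
Arguments aV0 : clear implicits.
Arguments ainit : clear implicits.
Arguments avert : clear implicits.

Section Games.
Local Open Scope ring_scope.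
Variable A : arena.
Notation V := (avert A).
Notation E := (aedge A).

Definition is_play (p : nat -> V) : Prop :=
  p 0%N = ainit A /\ forall n, E (p n) (p n.+1).

(** Histories v_0 ... v_n as sequences; strategies of Player 0 are maps
    from histories to vertices (only values on histories ending in V0 matter). *)
Definition strategy := seq V -> V.

Definition is_strategy0 (sigma : strategy) : Prop :=
  forall (x : seq V) (v : V), aV0 A v -> E v (sigma (rcons x v)).

Definition prefix (p : nat -> V) (n : nat) : seq V := mkseq p n.+1.

Definition consistent0 (sigma : strategy) (p : nat -> V) : Prop :=
  forall n, aV0 A (p n) -> p n.+1 = sigma (prefix p n).

Definition wins0_with (Win : (nat -> V) -> Prop) (sigma : strategy) : Prop :=
  is_strategy0 sigma /\
  forall p, is_play p -> consistent0 sigma p -> Win p.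

Definition wins0 (Win : (nat -> V) -> Prop) : Prop :=
  exists sigma, wins0_with Win sigma.

Definition upd_plus (M : Type) (mI : M) (Upd : M -> V -> V -> M)
    (h : seq V) : M :=
  match h with
  | [::] => mI
  | v0 :: x => (foldl (fun (mu : M * V) v => (Upd mu.1 mu.2 v, v)) (mI, v0) x).1
  end.

Definition is_next_move (M : Type) (Nxt : V -> M -> V) : Prop :=
  forall v m, aV0 A v -> E v (Nxt v m).

Definition induced_strategy (M : Type) (mI : M) (Upd : M -> V -> V -> M)
    (Nxt : V -> M -> V) : strategy :=
  fun h => Nxt (last (ainit A) h) (upd_plus mI Upd h).

(** Recharge weights: [Wt k] stands for the weight -k, [Rch] for R. *)
Inductive rweight := Wt of nat | Rch.

Definition is_R (r : rweight) : bool := if r is Rch then true else false.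
Definition wabs (r : rweight) : nat := if r is Wt k then k else 0%N.

(** EL_cap(v_0 ... v_n): j is the start of the longest suffix without an
    R-edge (the position right after the last R-edge, or 0). *)
Definition last_recharge (w : V -> V -> rweight) (p : nat -> V) (n : nat) : nat :=
  \max_(i < n.+1 | (i == 0%N :> nat) || is_R (w (p i.-1) (p i))) i.

Definition ELcap (w : V -> V -> rweight) (cap : nat) (p : nat -> V) (n : nat) : int :=
  (Posz cap - Posz (\sum_(last_recharge w p n <= i < n) wabs (w (p i) (p i.+1)))).

Definition Recharge (w : V -> V -> rweight) (cap : nat) (p : nat -> V) : Prop :=
  forall n, (0 <= ELcap w cap p n).

Definition avg_EL (w : V -> V -> rweight) (cap : nat) (p : nat -> V) (n : nat) : R :=
  ((n%:R)^-1 * \sum_(i < n) (ELcap w cap p i)%:~R).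

Definition AvgRecharge (w : V -> V -> rweight) (cap t : nat) (p : nat -> V) : Prop :=
  (limn_esup (fun n => (avg_EL w cap p n)%:E) <= (t%:R : R)%:E)%E /\
  Recharge w cap p.

End Games.

(* Main.v *)
Require Import Defs.
From HB Require Import structures.
From mathcomp Require Import all_boot all_order all_algebra.
From mathcomp Require Import all_classical all_reals.
From mathcomp Require Import ereal sequences topology normedtype.
From mathcomp Require Import Rstruct.
From mathcomp Require Import ring lra zify.
From Stdlib Require Import Rdefinitions.
Set Implicit Arguments. Unset Strict Implicit. Unset Printing Implicit Defensive.
Import Order.TTheory GRing.Theory Num.Theory.
Section Abs.
Local Open Scope ring_scope.
Variable S : finType.
Variable eS : rel S.
Variable own0 : pred S.
Variable c : S -> int.
Variable s0 : S.
Hypothesis tot : forall x, exists y, eS x y.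

Definition strat := seq S -> S.
Definition valid (r : strat) := forall h x, own0 x -> eS x (r (rcons h x)).
Definition isplay s (q : nat -> S) := q 0%nat = s /\ forall n, eS (q n) (q n.+1).
Definition prf (q : nat -> S) n := mkseq q n.+1.
Definition consb (b : bool) (r : strat) q :=
  forall n, own0 (q n) = b -> q n.+1 = r (prf q n).
Definition psum (q : nat -> S) n : int := \sum_(i < n) c (q i).

Definition succ x := odflt x [pick y | eS x y].
Lemma succP x : eS x (succ x).
Proof.
rewrite /succ; case: pickP => //= H; exfalso.
by case: (tot x) => y; rewrite H.
Qed.

Lemma preS q n : prf q n.+1 = rcons (prf q n) (q n.+1).
Proof. by rewrite /prf mkseqS. Qed.

Lemma pre_last q n : last s0 (prf q n) = q n.
Proof. by rewrite /prf mkseqS last_rcons. Qed.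

Section PlayOf.
Variables (s : S) (r0 r1 : strat).
Fixpoint hist n : seq S := match n with
  | 0 => [:: s]
  | n.+1 => let h := hist n in
      rcons h (if own0 (last s h) then r0 h else r1 h) end.
Definition playof n := last s (hist n).
Lemma hist_pre n : hist n = prf playof n.
Proof.
elim: n => [|n IH] //.
have -> : prf playof n.+1 = rcons (prf playof n) (playof n.+1) by rewrite /prf mkseqS.
by rewrite -IH /playof /= last_rcons.
Qed.
Lemma playofS n : playof n.+1 = if own0 (playof n) then r0 (prf playof n)
   else r1 (prf playof n).
Proof. by rewrite {1}/playof /= last_rcons hist_pre /playof hist_pre. Qed.
Lemma playof_play : valid r0 -> (forall h x, ~~ own0 x -> eS x (r1 (rcons h x))) ->
  isplay s playof.
Proof.
move=> v0 v1; split => // n; rewrite playofS.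
have E : prf playof n = rcons (mkseq playof n) (playof n) by rewrite /prf mkseqS.
case: ifP => H; rewrite E; [exact: v0 | apply: v1; by rewrite H].
Qed.
Lemma playof_cons0 : consb true r0 playof.
Proof. by move=> n H; rewrite playofS H. Qed.
Lemma playof_cons1 : consb false r1 playof.
Proof. by move=> n H; rewrite playofS H. Qed.
End PlayOf.

Definition posS (f : S -> S) : strat := fun h => f (last s0 h).

Lemma valid_posS f : (forall x, own0 x -> eS x (f x)) -> valid (posS f).
Proof. by move=> H h x ox; rewrite /posS last_rcons; apply: H. Qed.

Lemma succ_valid1 h x : ~~ own0 x -> eS x (posS succ (rcons h x)).
Proof. by move=> _; rewrite /posS last_rcons; apply: succP. Qed.

Lemma exists_play s r : valid r -> exists q, isplay s q /\ consb true r q.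
Proof.
move=> vr; exists (playof s r (posS succ)); split.
  by apply: playof_play => //; exact: succ_valid1.
exact: playof_cons0.
Qed.

Definition upd (st : seq S) y :=
  if y \in st then take (index y st).+1 st else rcons st y.
Definition stk (h : seq S) := if h is x :: r then foldl upd [:: x] r else [::].
Definition ssum (st : seq S) : int := \sum_(z <- st) c z.
Definition cyc st y : int := ssum (drop (index y st) st).
Fixpoint fc k st : bool := match k with 0 => false | k.+1 =>
  let x := last s0 st in
  let g := fun y => if y \in st then cyc st y <= 0 else fc k (rcons st y) in
  if own0 x then [exists y, eS x y && g y] else [forall y, eS x y ==> g y] end.
Definition W st := fc (#|S|.+1 - size st) st.
Definition gW st y := if y \in st then cyc st y <= 0 else W (rcons st y).

Lemma W_unfold st : (size st <= #|S|)%nat -> W st =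
  (if own0 (last s0 st) then [exists y, eS (last s0 st) y && gW st y]
   else [forall y, eS (last s0 st) y ==> gW st y]).
Proof.
move=> Hs; rewrite /W subSn //=; case: ifP => _;
  [apply: eq_existsb => y | apply: eq_forallb => y]; by rewrite /gW /W size_rcons subSS.
Qed.

Lemma size_uniq (st : seq S) : uniq st -> (size st <= #|S|)%nat.
Proof.
by move=> u; rewrite cardE; apply: uniq_leq_size => // x _; rewrite mem_enum.
Qed.

Definition GoodStack b st := [/\ st != [::], uniq st &
  forall k, (0 < k <= size st)%nat -> W (take k st) = b].

Lemma last_upd st y : last s0 (upd st y) = y.
Proof.
rewrite /upd; case: ifP => H; last by rewrite last_rcons.
by rewrite (take_nth s0) ?index_mem // last_rcons nth_index.
Qed.

Lemma stk_rcons h y : h != [::] -> stk (rcons h y) = upd (stk h) y.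
Proof. by case: h => // x r _ /=; rewrite foldl_rcons. Qed.

Lemma upd_good b st y : GoodStack b st -> gW st y = b -> GoodStack b (upd st y).
Proof.
case=> ne u P; rewrite /gW /upd; case: ifP => yin G.
  have jl : (index y st < size st)%nat by rewrite index_mem.
  split.
  - by rewrite -size_eq0 size_takel.
  - exact: take_uniq.
  - move=> k /andP[k0]; rewrite size_takel // => kle.
    by rewrite take_takel // P // k0 /= (leq_trans kle).
split.
- by case: (st).
- by rewrite rcons_uniq yin u.
- move=> k /andP[k0]; rewrite size_rcons leq_eqVlt => /orP[/eqP->|kle].
    by rewrite -(size_rcons st y) take_size.
  by rewrite -cats1 takel_cat // P // k0.
Qed.

Lemma W_choice b st : GoodStack b st ->
  (own0 (last s0 st) = b -> exists2 y, eS (last s0 st) y & gW st y = b) /\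
  (own0 (last s0 st) != b -> forall y, eS (last s0 st) y -> gW st y = b).
Proof.
case=> ne u P.
have Wst : W st = b.
  by rewrite -[st in W st]take_size P // lt0n size_eq0 ne /=.
move: Wst; rewrite W_unfold ?size_uniq //; clear P.
case: b; case: (own0 _) => /= H; split => //.
- by move=> _; case/existsP: H => y /andP[e g]; exists y.
- by move=> _ y e; move/forallP: H => /(_ y); rewrite e.
- move=> _ y e; move/negbT: H; rewrite negb_exists => /forallP /(_ y).
  by rewrite e /= => /negbTE.
- move=> _; move/negbT: H; rewrite negb_forall => /existsP [y].
  by rewrite negb_imply => /andP[e g]; exists y => //; apply/negbTE.
Qed.

Lemma ssum_upd st y : y \in st ->
  ssum st + c y = ssum (upd st y) + cyc st y.
Proof.
move=> yin; rewrite /upd yin /cyc /ssum.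
have jl : (index y st < size st)%nat by rewrite index_mem.
rewrite (drop_nth s0 jl) nth_index // big_cons.
rewrite -{1}(cat_take_drop (index y st).+1 st) big_cat /=.
by rewrite -addrA (addrC (c y)).
Qed.

Lemma ssum_rcons st y : ssum (rcons st y) = ssum st + c y.
Proof. by rewrite /ssum -cats1 big_cat /= big_seq1. Qed.

Definition Cabs : int := \sum_(z : S) `|c z|.

Lemma ssum_bound st : uniq st -> `|ssum st| <= Cabs.
Proof.
move=> u; apply: (le_trans (ler_norm_sum _ _ _)).
rewrite big_uniq // /Cabs (bigID (mem st) predT) /=.
by rewrite lerDl sumr_ge0.
Qed.

Lemma Cabs_ge0 : 0 <= Cabs.
Proof. by rewrite sumr_ge0. Qed.

Lemma psumS q n : psum q n.+1 = psum q n + c (q n).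
Proof. by rewrite /psum big_ord_recr. Qed.

Definition rho (b : bool) : strat := fun h =>
  let st := stk h in let x := last s0 st in
  odflt (succ x) [pick y | eS x y && (gW st y == b)].

Lemma last_stk h x : last s0 (stk (rcons h x)) = x.
Proof. by case: h => [//|y h]; rewrite stk_rcons // last_upd. Qed.

Lemma rho_edge b h x : eS x (rho b (rcons h x)).
Proof.
rewrite /rho last_stk; case: pickP => [y /andP[]//|_]; exact: succP.
Qed.

Lemma stk_prf q n : stk (prf q n.+1) = upd (stk (prf q n)) (q n.+1).
Proof. by rewrite preS stk_rcons // /prf mkseqS; case: (mkseq q n). Qed.

Section Run.
Variable b : bool.
Hypothesis Wb : W [:: s0] = b.
Variable q : nat -> S.
Hypothesis qp : isplay s0 q.
Hypothesis qc : consb b (rho b) q.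

Lemma run_good n : [/\ GoodStack b (stk (prf q n)), last s0 (stk (prf q n)) = q n
  & gW (stk (prf q n)) (q n.+1) = b].
Proof.
have step st m : GoodStack b st -> last s0 st = q m -> prf q m != [::] ->
    stk (prf q m) = st -> gW st (q m.+1) = b.
  move=> G L _ E; have [H1 H2] := W_choice G.
  case: (boolP (own0 (q m) == b)) => [/eqP o|o].
    rewrite (qc o) /rho E L; case: pickP => [y /andP[_ /eqP]//|N].
    have [|y e g] := H1; first by rewrite L.
    by move: (N y); rewrite -L e g eqxx.
  by apply: H2; rewrite L //; case: qp => _; apply.
elim: n => [|n [G L g]].
  have G : GoodStack b [:: q 0%nat].
    case: qp => -> _; split => // -[|[|k]] //.
  by split => //; apply: (step _ 0%nat) => //; case: qp.
rewrite stk_prf; have G' := upd_good G g.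
split => //; first exact: last_upd.
apply: (step _ n.+1 G'); [exact: last_upd | by rewrite /prf mkseqS; case: (mkseq _ _) | exact: stk_prf].
Qed.
End Run.

Lemma stk_prf0 q : stk (prf q 0) = [:: q 0%nat].
Proof. by []. Qed.

Lemma run0_bound q : W [:: s0] = true -> isplay s0 q -> consb true (rho true) q ->
  forall n, psum q n <= Cabs.
Proof.
move=> Wb qp qc.
have H n : psum q n.+1 <= ssum (stk (prf q n)).
  elim: n => [|n IH].
    by rewrite psumS /psum big_ord0 add0r stk_prf0 /ssum big_seq1.
  have [G L g] := run_good Wb qp qc n.
  rewrite psumS stk_prf; move: g; rewrite /gW.
  case: ifP => yin g.
    apply: (le_trans (lerD IH (lexx _))); rewrite ssum_upd //.
    by rewrite gerDl.
  by rewrite /upd yin ssum_rcons lerD2r.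
case=> [|n]; first by rewrite /psum big_ord0 Cabs_ge0.
apply: (le_trans (H n)); apply: (le_trans (ler_norm _)); apply: ssum_bound.
by have [[]] := run_good Wb qp qc n.
Qed.

Lemma run1_bound q : W [:: s0] = false -> isplay s0 q -> consb false (rho false) q ->
  forall n, n%:Z <= #|S|%:Z * psum q n + #|S|%:Z * (Cabs + 1).
Proof.
move=> Wb qp qc.
have H n : #|S|%:Z * ssum (stk (prf q n)) + n.+1%:Z - (size (stk (prf q n)))%:Z
     <= #|S|%:Z * psum q n.+1.
  elim: n => [|n IH].
    by rewrite psumS /psum big_ord0 add0r stk_prf0 /ssum big_seq1 /= addrK.
  have [[_ u _] L g] := run_good Wb qp qc n.
  have sz := size_uniq u.
  rewrite psumS stk_prf mulrDr; move: g; rewrite /gW.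
  set st := stk (prf q n) in IH sz u L *; set y := q n.+1.
  case: ifP => yin g.
    have jl : (index y st < size st)%nat by rewrite index_mem.
    have E := ssum_upd yin.
    have cy : 1 <= cyc st y by rewrite -gtz0_ge1 ltNge g.
    have N1 : #|S|%:Z <= #|S|%:Z * cyc st y by rewrite ler_peMr.
    rewrite /upd yin size_takel //.
    rewrite /upd yin in E.
    have E' : #|S|%:Z * ssum st + #|S|%:Z * c y =
       #|S|%:Z * ssum (take (index y st).+1 st) + #|S|%:Z * cyc st y
       by rewrite -!mulrDr E.
    have sz' : ((size st)%:Z <= #|S|%:Z) by rewrite lez_nat.
    lia.
  rewrite /upd yin ssum_rcons size_rcons mulrDr.
  lia.
case=> [|n]; first by rewrite /psum big_ord0 mulr0 add0r mulr_ge0 // addr_ge0 ?Cabs_ge0.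
have [[_ u _] _ _] := run_good Wb qp qc n.
have sz : ((size (stk (prf q n)))%:Z <= #|S|%:Z) by rewrite lez_nat size_uniq.
have B := ssum_bound u.
have B' : - Cabs <= ssum (stk (prf q n)) by rewrite lerNl (le_trans _ B) // -normrN ler_norm.
have B'' : #|S|%:Z * (- Cabs) <= #|S|%:Z * ssum (stk (prf q n)) by apply: ler_wpM2l.
move: (H n) => Hn.
lia.
Qed.

Lemma mkseq_cons (f : nat -> S) n : mkseq f n.+1 = f 0%nat :: mkseq (fun i => f i.+1) n.
Proof. by elim: n => [//|n IH]; rewrite mkseqS IH mkseqS. Qed.

Definition Ewin s (r : int) := exists r0, valid r0 /\
  forall q, isplay s q -> consb true r0 q -> forall n, psum q n <= r.

Definition fin s := exists r : nat, Ewin s r%:Z.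
Definition Pb s (r : nat) : bool := `[< Ewin s r%:Z >].
Definition fv s : nat := match pselect (exists r, Pb s r) with
  | left H => ex_minn H | right _ => 0%nat end.

Lemma fv_spec s : fin s -> Ewin s (fv s)%:Z /\ forall r : nat, Ewin s r%:Z -> (fv s <= r)%nat.
Proof.
move=> [r Hr]; rewrite /fv; case: pselect => [H|N]; last first.
  by exfalso; apply: N; exists r; apply/asboolP.
case: ex_minnP => m /asboolP Hm mn; split => // r' H'; apply: mn; exact/asboolP.
Qed.

Lemma pfx_core s : fin s -> forall r0, valid r0 ->
  (forall q, isplay s q -> consb true r0 q -> forall n, psum q n <= (fv s)%:Z) ->
  forall y, eS s y -> (own0 s -> y = r0 [:: s]) ->
  fin y /\ (fv y)%:Z + c s <= (fv s)%:Z.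
Proof.
move=> fs r0 v0 H y e oy.
pose r1 : strat := fun h => r0 (s :: h).
have v1 : valid r1 by move=> h x ox; rewrite /r1 -rcons_cons; apply: v0.
have Hy : forall q', isplay y q' -> consb true r1 q' -> forall n, psum q' n <= (fv s)%:Z - c s.
  move=> q' [q0 qe] qc n.
  pose q := fun n => if n is n'.+1 then q' n' else s.
  have qp : isplay s q by split => // -[|m] /=; [rewrite q0 | apply: qe].
  have qc' : consb true r0 q.
    move=> [|m] /= o; first by rewrite q0 oy.
    by rewrite (qc m o) /r1 /prf [in RHS]mkseq_cons.
  have := H q qp qc' n.+1; rewrite /psum big_ord_recl /=.
  have -> : \sum_(i < n) c (q (lift ord0 i)) = psum q' n.
    by apply: eq_bigr => i _; rewrite lift0.
  by rewrite addrC -lerBrDr.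
have [q' [qp qc]] := exists_play y v1.
have nn : 0 <= (fv s)%:Z - c s by move: (Hy q' qp qc 0%nat); rewrite /psum big_ord0.
have Ey : Ewin y `|(fv s)%:Z - c s|%nat%:Z by rewrite gez0_abs //; exists r1.
have fy : fin y by exists `|(fv s)%:Z - c s|%nat.
split => //; have [_ /(_ _ Ey)] := fv_spec fy.
rewrite -lez_nat gez0_abs // => le; by rewrite -lerBrDr.
Qed.

Lemma pfx s : fin s ->
  (own0 s -> exists y, [/\ eS s y, fin y & (fv y)%:Z + c s <= (fv s)%:Z]) /\
  (~~ own0 s -> forall y, eS s y -> fin y /\ (fv y)%:Z + c s <= (fv s)%:Z).
Proof.
move=> fs; have [[r0 [v0 H]] _] := fv_spec fs.
split.
  move=> o; exists (r0 [:: s]).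
  have e : eS s (r0 [:: s]) by apply: (v0 [::]).
  by have [] := pfx_core fs v0 H e (fun _ => erefl).
move=> o y e; apply: (pfx_core fs v0 H e) => o'.
by rewrite o' in o.
Qed.

Definition pstr x := odflt (succ x)
  [pick y | eS x y && `[< fin y >] && ((fv y)%:Z + c x <= (fv x)%:Z)].

Lemma pi_valid x : own0 x -> eS x (pstr x).
Proof.
by move=> _; rewrite /pstr; case: pickP => [y /andP[/andP[]]|_] //; exact: succP.
Qed.

Lemma pi_bound s : fin s -> forall q, isplay s q -> consb true (posS pstr) q ->
  forall n, fin (q n) /\ psum q n + (fv (q n))%:Z <= (fv s)%:Z.
Proof.
move=> fs q [q0 qe] qc; elim=> [|n [fn IH]].
  by rewrite q0 /psum big_ord0 add0r.
have [H0 H1] := pfx fn.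
suff [fy le] : fin (q n.+1) /\ (fv (q n.+1))%:Z + c (q n) <= (fv (q n))%:Z.
  split => //; apply: le_trans IH; rewrite psumS -addrA lerD2l addrC //.
case: (boolP (own0 (q n))) => o; last exact: H1.
rewrite (qc n o) /posS pre_last /pstr; case: pickP => [y /andP[/andP[_ /asboolP]]//|N].
have [y [e fy le]] := H0 o; move: (N y); rewrite e le andbT /=.
by move/negbT/asboolPn.
Qed.

Theorem abs_win : W [:: s0] = true ->
  exists C : int, forall q, isplay s0 q -> consb true (posS pstr) q ->
    forall n, psum q n <= C.
Proof.
move=> Wb.
have E : Ewin s0 `|Cabs|%nat%:Z.
  rewrite gez0_abs ?Cabs_ge0 //; exists (rho true); split.
    by move=> h x _; apply: rho_edge.
  by move=> q; apply: run0_bound.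
have fs : fin s0 by exists `|Cabs|%nat.
exists (fv s0)%:Z => q qp qc n.
have [_ le] := pi_bound fs qp qc n.
by apply: le_trans le; rewrite lerDl.
Qed.

Theorem abs_lose : W [:: s0] = false -> forall sg, valid sg ->
  exists q, [/\ isplay s0 q, consb true sg q &
    forall n, n%:Z <= #|S|%:Z * psum q n + #|S|%:Z * (Cabs + 1)].
Proof.
move=> Wb sg vs; exists (playof s0 sg (rho false)); split.
- by apply: playof_play => // h x _; apply: rho_edge.
- exact: playof_cons0.
- by apply: run1_bound => //; [apply: playof_play => // h x _; apply: rho_edge | exact: playof_cons1].
Qed.

End Abs.
Section Ana.
Local Open Scope ring_scope.

Lemma esup_le (u : nat -> R) (t K : R) :
  (forall n : nat, leq 1 n -> u n <= t + K / n%:R) ->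
  (limn_esup (fun n => (u n)%:E) <= t%:E)%E.
Proof.
move=> H; apply/lee_addgt0Pr => e e0.
rewrite limn_esup_lim; apply: lime_le; first exact: is_cvg_esups.
near=> n.
have n1 : (1 <= n)%nat by near: n; exact: nbhs_infty_ge.
have nK : K / e <= n%:R by near: n; exact: nbhs_infty_ger.
apply/ereal_supP => _ [k /= nk <-]; rewrite -EFinD lee_fin.
have k0 : (0 < k)%nat by apply: leq_trans nk.
apply: le_trans (H k k0) _; rewrite lerD2l ler_pdivrMr ?ltr0n //.
rewrite ler_pdivrMr // in nK.
apply: le_trans nK _; rewrite mulrC; apply: ler_wpM2l; [exact: ltW | by rewrite ler_nat].
Unshelve. all: by end_near.
Qed.

Lemma esup_gt (u : nat -> R) (t a K : R) : 0 < a ->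
  (forall n : nat, leq 1 n -> t + a - K / n%:R <= u n) ->
  ~ (limn_esup (fun n => (u n)%:E) <= t%:E)%E.
Proof.
move=> a0 H le.
suff : ((t + a / 2)%:E <= limn_esup (fun n => (u n)%:E))%E.
  move=> /(le_trans) /(_ le); rewrite lee_fin gerDl leNgt => /negP; apply.
  by rewrite divr_gt0.
rewrite limn_esup_lim; apply: lime_ge; first exact: is_cvg_esups.
near=> n.
have n1 : (1 <= n)%nat by near: n; exact: nbhs_infty_ge.
have nK : K / (a / 2) <= n%:R by near: n; exact: nbhs_infty_ger.
apply: le_ereal_sup_tmp; exists (u n)%:E; first by exists n => //=; rewrite leqnn.
rewrite lee_fin; apply: le_trans (H n n1).
have a2 : 0 < a / 2 by rewrite divr_gt0.
rewrite ler_pdivrMr // in nK.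
have : K / n%:R <= a / 2 by rewrite ler_pdivrMr ?ltr0n // mulrC.
lra.
Unshelve. all: by end_near.
Qed.
Lemma esup_le' (u : nat -> R) (t K : R) :
  (forall n : nat, leq 1 n -> n%:R * u n <= n%:R * t + K) ->
  (limn_esup (fun n => (u n)%:E) <= t%:E)%E.
Proof.
move=> H; apply: (@esup_le u t K) => n n1.
have n0 : 0 < n%:R :> R by rewrite ltr0n.
rewrite -(ler_pM2l n0); apply: le_trans (H n n1) _.
have -> : n%:R * (t + K / n%:R) = n%:R * t + K :> R.
  by field; rewrite gt_eqF.
by [].
Qed.

Lemma esup_gt' (u : nat -> R) (t N K : R) : 0 < N ->
  (forall n : nat, leq 1 n -> n%:R * (N * t + 1) <= N * (n%:R * u n) + K) ->
  ~ (limn_esup (fun n => (u n)%:E) <= t%:E)%E.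
Proof.
move=> N0 H; apply: (@esup_gt u t (1 / N) (K / N)); first by rewrite divr_gt0.
move=> n n1.
have n0 : 0 < n%:R :> R by rewrite ltr0n.
have Nn : 0 < N * n%:R by rewrite mulr_gt0.
rewrite -(ler_pM2l Nn).
have -> : N * n%:R * (t + 1 / N - K / N / n%:R) = n%:R * (N * t + 1) - K.
  by field; rewrite ?gt_eqF.
have := H n n1; rewrite -mulrA.
lra.
Qed.

End Ana.

Section Conc.
Variable A : arena.
Variable w : avert A -> avert A -> rweight.
Variables cap t : nat.
Local Notation V := (avert A).
Local Notation M := ('I_(cap + 2)).
Local Open Scope ring_scope.

Lemma mk_proof k : (minn k cap.+1 < cap + 2)%nat.
Proof. by rewrite addn2 ltnS geq_minr. Qed.
Definition mk k : M := Ordinal (mk_proof k).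

Definition stepm (m : M) (r : rweight) : M :=
  if (cap < m)%nat then mk cap.+1 else
  match r with Rch => mk cap | Wt k => if (k <= m)%nat then mk (m - k) else mk cap.+1 end.

Definition SS := (V * M)%type.
Definition eSS : rel SS := fun x y => aedge A x.1 y.1 && (y.2 == stepm x.2 (w x.1 y.1)).
Definition own0S : pred SS := fun x => aV0 A x.1.
Definition cS (x : SS) : int := if (x.2 <= cap)%nat then (x.2 : nat)%:Z - t%:Z else 1.
Definition sS0 : SS := (ainit A, mk cap).
Lemma totS x : exists y, eSS x y.
Proof.
case: (aedge_total x.1) => v e; exists (v, stepm x.2 (w x.1 v)).
by rewrite /eSS e eqxx.
Qed.

Fixpoint en (p : nat -> V) n : M := match n with
  | 0 => mk cap | n.+1 => stepm (en p n) (w (p n) (p n.+1)) end.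

Section ELp.
Variable p : nat -> V.

Lemma lr_le n : (last_recharge w p n <= n)%nat.
Proof. by apply/bigmax_leqP => i _; rewrite -ltnS ltn_ord. Qed.

Lemma lrS n : last_recharge w p n.+1 =
  if is_R (w (p n) (p n.+1)) then n.+1 else last_recharge w p n.
Proof.
rewrite /last_recharge big_mkcond big_ord_recr /= -big_mkcond /=.
case: ifP => _; last by rewrite maxn0.
by apply/maxn_idPr; rewrite ltnW // ltnS lr_le.
Qed.

Lemma EL0 : ELcap w cap p 0 = cap%:Z.
Proof.
have : (last_recharge w p 0 <= 0)%nat by exact: lr_le.
by rewrite /ELcap leqn0 => /eqP ->; rewrite big_geq // subr0.
Qed.

Lemma ELS n : ELcap w cap p n.+1 = if is_R (w (p n) (p n.+1)) then cap%:Z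
  else ELcap w cap p n - (wabs (w (p n) (p n.+1)))%:Z.
Proof.
rewrite /ELcap lrS; case: ifP => _; first by rewrite big_geq // subr0.
by rewrite big_nat_recr ?lr_le //= PoszD opprD addrA.
Qed.

Lemma en_spec n : ((en p n <= cap)%nat /\ (en p n)%:Z = ELcap w cap p n) \/
  ((cap < en p n)%nat /\ exists2 m, (m <= n)%nat & ELcap w cap p m < 0).
Proof.
elim: n => [|n [[le E]|[gt [m mn neg]]]].
- by left; rewrite EL0 /=; split; lia.
- rewrite /= /stepm ltnNge le /=; move: (ELS n).
  case: (w (p n) (p n.+1)) => [k|] /= EL; last by left; rewrite EL; split; lia.
  case: (leqP k (en p n)) => kl /=.
    left; rewrite EL -E; split; lia.
  right; split; first lia.
  by exists n.+1 => //; rewrite EL -E; lia.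
- right; rewrite /= /stepm gt; split; first by rewrite /=; lia.
  by exists m => //; rewrite (leq_trans mn).
Qed.

Lemma en_bad n : (cap < en p n)%nat -> (cap < en p n.+1)%nat.
Proof. by move=> H; rewrite /= /stepm H /=; lia. Qed.

Lemma upd_plus_en n :
  upd_plus (mk cap) (fun m v v' => stepm m (w v v')) (Defs.prefix p n) = en p n.
Proof.
rewrite /Defs.prefix mkseq_cons /=.
suff -> : foldl (fun (mu : M * V) v => (stepm mu.1 (w mu.2 v), v)) (mk cap, p 0%nat)
   (mkseq (fun i => p i.+1) n) = (en p n, p n) by [].
by elim: n => [//|n IH]; rewrite mkseqS foldl_rcons IH.
Qed.
End ELp.

Lemma cS_EL (p : nat -> V) n : (en p n <= cap)%nat -> (en p n)%:Z = ELcap w cap p n ->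
  cS (p n, en p n) = ELcap w cap p n - t%:Z.
Proof. by move=> le E; rewrite /cS /= le E. Qed.

Lemma sumEL (p : nat -> V) (q : nat -> SS) n :
  (forall i, q i = (p i, en p i)) ->
  (forall i, (en p i <= cap)%nat /\ (en p i)%:Z = ELcap w cap p i) ->
  psum cS q n = \sum_(i < n) ELcap w cap p i - (n * t)%:Z.
Proof.
move=> qE H; rewrite /psum.
under eq_bigr => i _ do rewrite qE (cS_EL (proj1 (H i)) (proj2 (H i))).
rewrite sumrB sumr_const card_ord; congr (_ - _).
by rewrite -mulr_natr natz -PoszM mulnC.
Qed.

Lemma avg_mul (p : nat -> V) n : leq 1 n ->
  n%:R * avg_EL w cap p n = (\sum_(i < n) ELcap w cap p i)%:~R.
Proof.
move=> n1; rewrite /avg_EL mulrA mulfV ?mul1r ?rmorph_sum //.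
by rewrite pnatr_eq0 -lt0n.
Qed.

Lemma good_all (p : nat -> V) (q : nat -> SS) (C : int) :
  (forall i, q i = (p i, en p i)) -> (forall n, psum cS q n <= C) ->
  forall n, (en p n <= cap)%nat.
Proof.
move=> qE B n; rewrite leqNgt; apply/negP => bad.
have bad' m : (cap < en p (n + m))%nat.
  elim: m => [|m IH]; first by rewrite addn0.
  have -> : (n + m.+1 = (n + m).+1)%nat by rewrite addnS.
  exact: en_bad.
have G m : psum cS q (n + m) = psum cS q n + m%:Z.
  elim: m => [|m IH]; first by rewrite addn0 addr0.
  have -> : (n + m.+1 = (n + m).+1)%nat by rewrite addnS.
  rewrite psumS IH qE /cS /= leqNgt bad' /=.
  lia.
have := B (n + (absz (C - psum cS q n)).+1); rewrite G.
lia.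
Qed.

Lemma win_dir : W eSS own0S cS sS0 [:: sS0] = true ->
  exists (mI : M) (Upd : M -> V -> V -> M) (Nxt : V -> M -> V),
    is_next_move Nxt /\ wins0_with (AvgRecharge w cap t) (induced_strategy mI Upd Nxt).
Proof.
move=> Wb; set P := pstr eSS own0S cS.
have [C HC] := abs_win totS Wb.
exists (mk cap), (fun m v v' => stepm m (w v v')), (fun v m => (P (v, m)).1).
have nm : is_next_move (fun v m => (P (v, m)).1).
  move=> v m o; have := @pi_valid _ eSS own0S cS totS (v, m) o.
  by case/andP.
split => //; split.
  by move=> x v o; rewrite /induced_strategy last_rcons; exact: nm.
move=> p [p0 pe] pc.
pose q n := (p n, en p n).
have qp : isplay eSS sS0 q.
  by split; [rewrite /q p0 | move=> n; rewrite /eSS /= pe eqxx].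
have qc : consb own0S true (posS sS0 P) q.
  move=> n o; rewrite /posS pre_last.
  have Hp := pc n o; rewrite /induced_strategy upd_plus_en in Hp.
  rewrite /Defs.prefix mkseqS last_rcons in Hp.
  have := @pi_valid _ eSS own0S cS totS (q n) o; rewrite -/P.
  rewrite /eSS => /andP[_ /eqP E2].
  move: Hp E2; rewrite /q /=; case: (P (p n, en p n)) => a b /= Hp ->.
  by rewrite Hp.
have B := HC q qp qc.
have qE i : q i = (p i, en p i) by [].
have G := good_all qE B.
have H i : (en p i <= cap)%nat /\ (en p i)%:Z = ELcap w cap p i.
  by case: (en_spec p i) => [//|[]]; rewrite ltnNge G.
split; last by move=> n; rewrite -(proj2 (H n)).
apply: (@esup_le' _ _ C%:~R) => n n1.
rewrite avg_mul // -natrM.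
rewrite -[((n * t)%nat)%:R]/(((n * t)%nat%:Z)%:~R : R) -intrD ler_int.
have := B n; rewrite (sumEL n qE H) PoszM.
lia.
Qed.

Lemma lose_dir (sg : strategy A) : W eSS own0S cS sS0 [:: sS0] = false ->
  wins0_with (AvgRecharge w cap t) sg -> False.
Proof.
move=> Wb [vs ws].
pose sgS : strat SS := fun h => let x := last sS0 h in
  let v' := sg (map fst h) in (v', stepm x.2 (w x.1 v')).
have vS : valid eSS own0S sgS.
  move=> h x o; rewrite /sgS last_rcons map_rcons /eSS /= eqxx andbT.
  exact: vs.
have [q [[q0 qe] qc lb]] := abs_lose totS Wb vS.
pose p n := (q n).1.
have qE n : q n = (p n, en p n).
  elim: n => [|n IH]; first by rewrite /p q0.
  move: (qe n); rewrite /eSS => /andP[_ /eqP E].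
  by rewrite (surjective_pairing (q n.+1)) E IH.
have pp : is_play p.
  by split; [rewrite /p q0 | move=> n; case/andP: (qe n)].
have pc : consistent0 sg p.
  move=> n o; rewrite /p (qc n o) /sgS /=; congr sg.
  by rewrite /prf /Defs.prefix /mkseq -map_comp.
have [avg rech] := ws p pp pc.
have H i : (en p i <= cap)%nat /\ (en p i)%:Z = ELcap w cap p i.
  case: (en_spec p i) => [//|[_ [m _ neg]]].
  by move: (rech m); rewrite leNgt neg.
pose N := #|{: (V * M)%type}|.
have lb' : forall n, n%:Z <= N%:Z * psum cS q n + N%:Z * (Cabs cS + 1) := lb.
have N0 : (0 < N)%nat by apply/card_gt0P; exists sS0.
apply: (@esup_gt' _ t%:R N%:R ((N%:Z * (Cabs cS + 1))%:~R) _ _ avg).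
  by rewrite ltr0n.
move=> n n1; rewrite avg_mul //.
have Hint : n%:Z * (N%:Z * t%:Z + 1) <=
    N%:Z * (\sum_(i < n) ELcap w cap p i) + N%:Z * (Cabs cS + 1).
  have := lb' n; rewrite (sumEL n qE H) PoszM.
  nia.
move: Hint; rewrite -(ler_int R) !(intrD, intrM) => Hc.
exact: Hc.
Qed.

End Conc.

Theorem corollary1 (A : arena) (w : avert A -> avert A -> rweight) (cap t : nat) :
  wins0 (AvgRecharge w cap t) ->
  exists (mI : 'I_(cap + 2)) (Upd : 'I_(cap + 2) -> avert A -> avert A -> 'I_(cap + 2))
         (Nxt : avert A -> 'I_(cap + 2) -> avert A),
    is_next_move Nxt /\
    wins0_with (AvgRecharge w cap t) (induced_strategy mI Upd Nxt).
Proof.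
move=> [sg Hsg].
case E: (W (@eSS A w cap) (@own0S A cap) (@cS A cap t) (sS0 A cap) [:: sS0 A cap]).
  exact: win_dir.
by exfalso; apply: (lose_dir E Hsg).
Qed.
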